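(* Let $\mathcal{H}$ be a supersolvable arrangement of rank $n\ge 3$ with decomposition $\mathcal{H}=\mathcal{H}_0\sqcup\mathcal{H}_1$ as in the definition of supersolvability, and let $\rho:\mathcal{R}(\mathcal{H})\to\mathcal{R}(\mathcal{H}_0)$ map every region of $\mathcal{H}$ to the region of $\mathcal{H}_0$ containing it. Then: (i) for any $R\in\mathcal{R}(\mathcal{H}_0)$, the subgraph of $G(\mathcal{H})$ induced by $\rho^{-1}(R)$ is a path of length $|\mathcal{H}_1|$; (ii) if $R,R'\in\mathcal{R}(\mathcal{H}_0)$ are adjacent in $G(\mathcal{H}_0)$, then, writing $\ell=|\mathcal{H}_1|$, the two paths $\rho^{-1}(R)$ and $\rho^{-1}(R')$ can be enumerated along the paths as $A_0,\dots,A_\ell$ and $B_0,\dots,B_\ell$ such that $\{A_0,B_0\}$ and $\{A_\ell,B_\ell\}$ are edges of $G(\mathcal{H})$ and every edge of $G(\mathcal{H})$ between the two paths is of the form $\{A_i,B_i\}$ for some $i$; (iii) if $R,R'\in\mathcal{R}(\mathcal{H}_0)$ are not adjacent in $G(\mathcal{H}_0)$, then there are no edges of $G(\mathcal{H})$ between $\rho^{-1}(R)$ and $\rho^{-1}(R')$.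
   Context: A hyperplane arrangement is a finite set of linear hyperplanes in $\mathbb{R}^d$; its rank is the dimension of the span of the normals; $\mathcal{R}(\mathcal{H})$ denotes its set of regions (connected components of the complement of the union of the hyperplanes), and $G(\mathcal{H})$ its graph of regions (regions adjacent iff separated by exactly one hyperplane). An arrangement of rank $n$ is supersolvable if $n\le 2$, or $n\ge 3$ and $\mathcal{H}=\mathcal{H}_0\sqcup\mathcal{H}_1$ with both parts nonempty, $\mathcal{H}_0$ supersolvable of rank $n-1$, and for any distinct $H',H''\in\mathcal{H}_1$ some $H\in\mathcal{H}_0$ satisfies $H'\cap H''\subseteq H$. The length of a path is its number of edges. *)

(* Defs.v *)
From HB Require Import structures.
From mathcomp Require Import all_boot all_order all_algebra.
From mathcomp Require Import all_classical all_reals all_analysis.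
Set Implicit Arguments. Unset Strict Implicit. Unset Printing Implicit Defensive.
Import Order.TTheory GRing.Theory Num.Theory.
Import numFieldNormedType.Exports.
Local Open Scope classical_set_scope.
Local Open Scope ring_scope.

Section Arrangements.
(* A hyperplane arrangement is
   given by a finite index type I and nonzero normals a : I -> 'rV_d; the
   hyperplane of index i is ker (a i).  Sub-arrangements are subsets S of I. *)
Variables (R : realType) (d : nat) (I : finType) (a : I -> 'rV[R]_d).

Definition dotv (u x : 'rV[R]_d) : R := \sum_(j < d) u 0 j * x 0 j.

Definition hyp (i : I) : set 'rV[R]_d := [set x | dotv (a i) x = 0].

Definition arr_rank (S : {set I}) : nat :=
  \dim <<[seq a i | i <- enum S]>>%VS.

Definition arr_compl (S : {set I}) : set 'rV[R]_d :=
  [set x | forall i, i \in S -> ~ hyp i x].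

Definition regions (S : {set I}) : set (set 'rV[R]_d) :=
  [set C : set 'rV[R]_d | exists2 x, arr_compl S x & C = connected_component (arr_compl S) x].

Definition separates (i : I) (C C' : set 'rV[R]_d) : Prop :=
  (C `<=` [set x | 0 < dotv (a i) x] /\ C' `<=` [set x | dotv (a i) x < 0]) \/
  (C `<=` [set x | dotv (a i) x < 0] /\ C' `<=` [set x | 0 < dotv (a i) x]).

Definition region_adj (S : {set I}) (C C' : set 'rV[R]_d) : Prop :=
  regions S C /\ regions S C' /\
  exists i, [/\ i \in S, separates i C C' &
                forall j, j \in S -> separates j C C' -> j = i].

Inductive supersolvable : {set I} -> Prop :=
| ss_small (S : {set I}) : (arr_rank S <= 2)%N -> supersolvable S
| ss_step (S S0 : {set I}) :
    (3 <= arr_rank S)%N -> S0 \subset S -> S0 != finset.set0 -> S :\: S0 != finset.set0 ->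
    supersolvable S0 -> arr_rank S0 = (arr_rank S).-1 ->
    (forall i j, i \in S :\: S0 -> j \in S :\: S0 -> i != j ->
       exists2 k, k \in S0 & hyp i `&` hyp j `<=` hyp k) ->
    supersolvable S.

End Arrangements.

Definition path_enum {T : Type} (E : T -> T -> Prop) (P : set T) (l : nat)
  (A : nat -> T) : Prop :=
  [/\ (forall i j, (i <= l)%N -> (j <= l)%N -> A i = A j -> i = j),
      P = A @` [set i | (i <= l)%N] &
      (forall i j, (i <= l)%N -> (j <= l)%N ->
         (E (A i) (A j) <-> (i.+1 = j \/ j.+1 = i)))].

(* Main.v *)
Require Import Defs.
From HB Require Import structures.
From mathcomp Require Import all_boot all_order all_algebra.
From mathcomp Require Import all_classical all_reals all_analysis.
From mathcomp Require Import lra ring zify.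
Import Order.TTheory GRing.Theory Num.Theory.
Import numFieldNormedType.Exports.
Local Open Scope classical_set_scope.
Local Open Scope ring_scope.
Set Implicit Arguments. Unset Strict Implicit. Unset Printing Implicit Defensive.

Section Aux.
Variables (R : realType) (d : nat).

Lemma dotvD (u x y : 'rV[R]_d) : dotv u (x + y) = dotv u x + dotv u y.
Proof. by rewrite /dotv -big_split /=; apply: eq_bigr => j _; rewrite mxE mulrDr. Qed.

Lemma dotvZ (u x : 'rV[R]_d) t : dotv u (t *: x) = t * dotv u x.
Proof. by rewrite /dotv mulr_sumr; apply: eq_bigr => j _; rewrite mxE mulrCA. Qed.

Lemma dotvN (u x : 'rV[R]_d) : dotv u (- x) = - dotv u x.
Proof. by rewrite -scaleN1r dotvZ mulN1r. Qed.

Lemma dotvB (u x y : 'rV[R]_d) : dotv u (x - y) = dotv u x - dotv u y.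
Proof. by rewrite dotvD dotvN. Qed.

Lemma dotv_cont (u : 'rV[R]_d) : continuous (dotv u).
Proof.
rewrite /dotv.
suff H : forall s : seq 'I_d, continuous (fun x : 'rV[R]_d => \sum_(j <- s) u 0 j * x 0 j).
  exact: H.
elim=> [|j s IH].
  under eq_fun do rewrite big_nil.
  by move=> x; apply: cst_continuous.
under eq_fun do rewrite big_cons.
move=> x.
apply: (@continuousD _ _ _ (fun y : 'rV[R]_d => u 0 j * y 0 j) (fun y => \sum_(j <- s) u 0 j * y 0 j)); last exact: IH.
apply: (@continuousM _ _ (fun _ => u 0 j) (fun y : 'rV[R]_d => y 0 j)).
  exact: cst_continuous.
exact: coord_continuous.
Qed.

Lemma seg_cont (x y : 'rV[R]_d) : continuous (fun t : R => x + t *: (y - x)).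
Proof.
move=> t.
apply: (@continuousD _ _ _ (fun _ => x) (fun t : R => t *: (y - x))).
  exact: cst_continuous.
by apply: (@continuousZr_tmp _ _ _ (fun t : R => t)); apply: cvg_id.
Qed.

End Aux.

Section Cells.
Variables (R : realType) (d : nat) (I : finType) (a : I -> 'rV[R]_d).
Local Notation f i x := (dotv (a i) x).

Definition cell (S : {set I}) (x : 'rV[R]_d) : set 'rV[R]_d :=
  [set y | arr_compl a S y /\ forall i, i \in S -> (0 < f i y) = (0 < f i x)].

Lemma compl_neq S y i : arr_compl a S y -> i \in S -> f i y != 0.
Proof. by move=> Ay iS; apply/eqP => h; exact: (Ay i iS h). Qed.

Lemma sign_comb (p q t : R) : 0 <= t -> t <= 1 -> p != 0 -> q != 0 ->
  (0 < q) = (0 < p) -> ((1 - t) * p + t * q != 0) /\ (0 < (1 - t) * p + t * q) = (0 < p).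
Proof.
move=> t0 t1 p0 q0 e.
case: (ltrgtP 0 p) e => [pp|pn|/eqP]; last by rewrite eq_sym (negbTE p0).
  move=> qp; have hq : 0 < q by rewrite qp.
  have h : 0 < (1 - t) * p + t * q by nra.
  by split; [rewrite gt_eqF|rewrite h].
move=> /negbT; rewrite -leNgt le_eqVlt (negbTE q0) /= => qn.
have h : (1 - t) * p + t * q < 0 by nra.
by split; [rewrite lt_eqF|rewrite ltNge ltW].
Qed.

Lemma comp_cell S x : arr_compl a S x ->
  connected_component (arr_compl a S) x = cell S x.
Proof.
move=> Ax; apply/seteqP; split.
- move=> z Kz; have Az := connected_component_sub Kz; split=> // i iS.
  case: (boolP ((0 < f i z) == (0 < f i x))) => [/eqP//|neq]; exfalso.
  have cI : connected (dotv (a i) @` connected_component (arr_compl a S) x).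
    apply: connected_continuous_connected; first exact: component_connected.
    exact/continuous_subspaceT/dotv_cont.
  have /connected_intervalP iI := cI.
  have Kx : connected_component (arr_compl a S) x x by exact: connected_component_refl.
  have : (dotv (a i) @` connected_component (arr_compl a S) x) 0.
    have zn := compl_neq Az iS; have xn := compl_neq Ax iS.
    case: (ltrgtP 0 (f i x)) neq => [xp|xn'|/eqP]; last by rewrite eq_sym (negbTE xn).
      move=> hneq; have zneg : f i z < 0 by move: hneq zn; case: (ltrgtP (f i z) 0).
      apply: (iI (f i z) (f i x)); [by exists z|by exists x|].
      by rewrite (ltW zneg) ltW.
    move=> hneq; have zp : 0 < f i z by move: hneq zn; case: (ltrgtP (f i z) 0).
    apply: (iI (f i x) (f i z)); [by exists x|by exists z|].
    by rewrite (ltW zp) ltW.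
  by case=> w Kw w0; exact: (connected_component_sub Kw i iS).
- move=> y [Ay Hy].
  pose sg := fun t : R => x + t *: (y - x).
  have fsg i t : f i (sg t) = (1 - t) * f i x + t * f i y.
    by rewrite /sg dotvD dotvZ dotvB; ring.
  have segA : sg @` `[0, 1] `<=` cell S x.
    move=> _ [t t01 <-]; move: t01; rewrite /= in_itv /= => /andP[t0 t1].
    split=> [i iS|i iS].
      rewrite /hyp /= fsg; apply/eqP.
      by case: (sign_comb t0 t1 (compl_neq Ax iS) (compl_neq Ay iS) (Hy i iS)).
    rewrite fsg.
    by case: (sign_comb t0 t1 (compl_neq Ax iS) (compl_neq Ay iS) (Hy i iS)).
  have sub : sg @` `[0, 1] `<=` connected_component (arr_compl a S) x.
    apply: connected_component_max.
    - exists 0; first by rewrite /= in_itv /= lexx ler01.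
      by rewrite /sg scale0r addr0.
    - by move=> z /segA [].
    - apply: connected_continuous_connected; first exact: segment_connected.
      exact/continuous_subspaceT/seg_cont.
  apply: sub; exists 1; first by rewrite /= in_itv /= lexx ler01.
  by rewrite /sg scale1r addrC subrK.
Qed.

End Cells.

Section Cells2.
Variables (R : realType) (d : nat) (I : finType) (a : I -> 'rV[R]_d).
Local Notation f i x := (dotv (a i) x).
Local Notation cell := (cell a).

Lemma cell_mem S x : arr_compl a S x -> cell S x x.
Proof. by move=> Ax; split. Qed.

Lemma cell_eq S x y : cell S x y -> cell S y = cell S x.
Proof.
move=> [Ay Hy]; apply/seteqP; split=> z [Az Hz]; split=> // i iS.
  by rewrite Hz // Hy.
by rewrite Hz // Hy.
Qed.

Lemma cell_eqP S x y : arr_compl a S y -> cell S y = cell S x -> cell S x y.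
Proof. by move=> Ay <-; exact: cell_mem. Qed.

Lemma regionsP S C : regions a S C <-> exists2 x, arr_compl a S x & C = cell S x.
Proof.
split=> [[x Ax ->]|[x Ax ->]]; exists x => //; by rewrite comp_cell.
Qed.

Lemma regions_cell S x : arr_compl a S x -> regions a S (cell S x).
Proof. by move=> Ax; apply/regionsP; exists x. Qed.

Lemma sep_cell S x y i : arr_compl a S x -> arr_compl a S y -> i \in S ->
  separates a i (cell S x) (cell S y) <-> (0 < f i x) != (0 < f i y).
Proof.
move=> Ax Ay iS; split.
  case=> [[hx hy]|[hx hy]].
    have := hx x (cell_mem Ax); have := hy y (cell_mem Ay) => /= h1 h2.
    by rewrite h2 ltNge (ltW h1).
  have := hx x (cell_mem Ax); have := hy y (cell_mem Ay) => /= h1 h2.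
  by rewrite h1 ltNge (ltW h2).
have xn := compl_neq Ax iS; have yn := compl_neq Ay iS.
case: (ltrgtP 0 (f i x)) xn => [xp|xn'|]//= _ hy.
  left; split=> z [Az Hz]; rewrite /= ?Hz // ?xp //.
  have zn := compl_neq Az iS.
  have : (0 < f i z) = false by rewrite Hz //; move/negbTE: hy.
  by move: zn; case: (ltrgtP (f i z) 0).
right; split=> z [Az Hz] /=.
  have zn := compl_neq Az iS.
  have : (0 < f i z) = false by rewrite Hz // ltNge (ltW xn').
  by move: zn; case: (ltrgtP (f i z) 0).
by rewrite Hz //; move: hy; rewrite negbK.
Qed.

Definition difS (S : {set I}) x y := [set i in S | (0 < f i x) != (0 < f i y)].

Lemma adj_cell S x y : arr_compl a S x -> arr_compl a S y ->
  region_adj a S (cell S x) (cell S y) <-> #|difS S x y| = 1%N.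
Proof.
move=> Ax Ay; split.
  case=> _ [_ [i [iS si U]]].
  apply/eqP/cards1P; exists i; apply/setP => j; rewrite !inE.
  apply/idP/idP.
    by case/andP=> jS dj; apply/eqP/U => //; exact/(sep_cell Ax Ay jS).
  by move/eqP->; rewrite iS /=; exact/(sep_cell Ax Ay iS).
move/eqP/cards1P => [i di].
have : i \in difS S x y by rewrite di inE.
rewrite inE => /andP[iS dfi].
split; first exact: regions_cell.
split; first exact: regions_cell.
exists i; split=> //; first by exact/(sep_cell Ax Ay iS).
move=> j jS /(sep_cell Ax Ay jS) dj.
have : j \in difS S x y by rewrite inE jS dj.
by rewrite di inE => /eqP.
Qed.

End Cells2.

Import VectorInternalTheory.

Section LinAlg.
Variables (R : realType) (d : nat).

Lemma sep_vec (U : {vspace 'rV[R]_d}) (u : 'rV[R]_d) : u \notin U ->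
  exists v, (forall w, w \in U -> dotv w v = 0) /\ dotv u v != 0.
Proof.
have memE w : (w \in U) = (v2r w <= vs2mx U)%MS.
  by rewrite unfold_in /= /vline mx2vsK.
pose C := cokermx (vs2mx U).
rewrite memE submxE => nz.
have [k hk] : exists k, (v2r u *m C) 0 k != 0.
  case: (boolP [exists k, (v2r u *m C) 0 k != 0]) => [/existsP//|/existsPn h].
  exfalso; suff : v2r u *m C = 0 by move/eqP; rewrite (negbTE nz).
  by apply/rowP => k; rewrite [RHS]mxE; move: (h k); rewrite negbK => /eqP.
pose phi := fun w : 'rV[R]_d => (v2r w *m C) 0 k.
have phiE w : dotv w (\row_j phi (delta_mx 0 j)) = phi w.
  rewrite /phi {2}(row_sum_delta w) linear_sum /= mulmx_suml summxE /dotv.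
  apply: eq_bigr => j _; rewrite mxE linearZ /= -scalemxAl [RHS]mxE.
  by rewrite ?mxE.
exists (\row_j phi (delta_mx 0 j)); split; last by rewrite phiE.
move=> w; rewrite phiE memE submxE /phi => /eqP ->.
by rewrite mxE.
Qed.

End LinAlg.

Section VExist.
Variables (R : realType) (d : nat) (I : finType) (a : I -> 'rV[R]_d).
Local Notation f i x := (dotv (a i) x).

Lemma dotv_self_gt0 (u : 'rV[R]_d) : u != 0 -> 0 < dotv u u.
Proof.
move=> unz; rewrite /dotv lt0r; apply/andP; split; last first.
  by apply: sumr_ge0 => j _; rewrite -expr2 sqr_ge0.
apply: contra unz => /eqP /psumr_eq0P h.
apply/eqP/rowP => j; rewrite mxE.
have := h (fun i _ => sqr_ge0 (u 0 i)) j isT; rewrite -expr2 => /eqP.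
by rewrite sqrf_eq0 => /eqP.
Qed.

Lemma hyp_sub_eq i k : a i != 0 -> a k != 0 -> hyp a i `<=` hyp a k -> hyp a i = hyp a k.
Proof.
move=> ai ak sub; apply/seteqP; split=> // x xk.
set w := a i.
have wp : 0 < f i w := dotv_self_gt0 ai.
have key y : f k y = (f i y / f i w) * f k w.
  have : hyp a i (y - (f i y / f i w) *: w).
    rewrite /hyp /= dotvB dotvZ mulfVK ?subrr //; exact: lt0r_neq0.
  move/sub; rewrite /hyp /= dotvB dotvZ => /eqP; rewrite subr_eq0 => /eqP.
  done.
case: (eqVneq (f k w) 0) => [kw0|kw].
  have := dotv_self_gt0 ak; rewrite key kw0 mulr0 ltxx //.
move: xk; rewrite /hyp /= key => /eqP; rewrite mulf_eq0 (negbTE kw) orbF.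
by rewrite mulf_eq0 invr_eq0 (gt_eqF wp) orbF => /eqP.
Qed.

Lemma arr_rank_le (S T : {set I}) :
  {subset [seq a i | i <- enum S] <= <<[seq a i | i <- enum T]>>%VS} ->
  (arr_rank a S <= arr_rank a T)%N.
Proof. by move=> h; apply: dimvS; apply/span_subvP. Qed.

Lemma exists_h (H0 : {set I}) n : arr_rank a [set: I] = n -> arr_rank a H0 = n.-1 ->
  (0 < n)%N -> exists2 h, h \notin H0 & a h \notin <<[seq a i | i <- enum H0]>>%VS.
Proof.
move=> rT r0 n0.
case: (boolP [exists h, (h \notin H0) && (a h \notin <<[seq a i | i <- enum H0]>>%VS)]).
  by case/existsP => h /andP[]; exists h.
move/existsPn => hn; exfalso.
have : (arr_rank a [set: I] <= arr_rank a H0)%N.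
  apply: arr_rank_le => w /mapP [i _ ->].
  case: (boolP (i \in H0)) => iH.
    by apply: memv_span; apply: map_f; rewrite mem_enum.
  by move: (hn i); rewrite iH /= negbK.
rewrite rT r0.
by case: n n0 {rT r0} => // n _; rewrite /= ltnn.
Qed.

Lemma exists_v (H0 : {set I}) n :
  (forall i, a i != 0) ->
  (forall i j, hyp a i = hyp a j -> i = j) ->
  arr_rank a [set: I] = n -> arr_rank a H0 = n.-1 -> (0 < n)%N ->
  (forall i j, i \in ~: H0 -> j \in ~: H0 -> i != j ->
     exists2 k, k \in H0 & hyp a i `&` hyp a j `<=` hyp a k) ->
  exists v, (forall i, i \in H0 -> f i v = 0) /\ (forall h, h \in ~: H0 -> f h v != 0).
Proof.
move=> anz ainj rT r0 n0 ss.
have [h hH hV] := exists_h rT r0 n0.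
have [v [vV vh]] := sep_vec hV.
have v0 : forall i, i \in H0 -> f i v = 0.
  by move=> i iH; apply: vV; apply: memv_span; apply: map_f; rewrite mem_enum.
exists v; split => // h'; rewrite inE => h'H.
case: (eqVneq h' h) => [->//|ne].
have h'in : h' \in ~: H0 by rewrite inE.
have hin : h \in ~: H0 by rewrite inE.
have [k kH sub] := ss h' h h'in hin ne.
apply/eqP => h'v.
have : hyp a h' `<=` hyp a k.
  move=> x xh'.
  have hvnz : f h v != 0 by [].
  have : (hyp a h' `&` hyp a h) (x - (f h x / f h v) *: v).
    split; rewrite /hyp /= dotvB dotvZ.
      by rewrite h'v mulr0 subr0; exact: xh'.
    by rewrite mulfVK // subrr.
  move/sub; rewrite /hyp /= dotvB dotvZ (v0 k kH) mulr0 subr0.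
  done.
move/(hyp_sub_eq (anz h') (anz k))/ainj => e.
by move: h'H; rewrite e kH.
Qed.

End VExist.

Section Count.
Variables (R : realType) (I : finType).

Lemma exists_min (S : {set I}) (w : I -> R) : S != finset.set0 ->
  exists2 g, g \in S & forall h, h \in S -> w g <= w h.
Proof.
case/set0Pn => i0 Si0.
have := @extremumP _ _ (fun x y : R => x <= y) i0 (fun i => i \in S) w
  (@lexx _ _) (@le_trans _ _) (@le_total _ _) Si0.
by case=> g gS hg; exists g.
Qed.

Lemma count_t (S : {set I}) (w : I -> R) : {in S &, injective w} ->
  forall k, (k <= #|S|)%N ->
  exists t, (forall h, h \in S -> w h != t) /\ #|[set h in S | w h < t]| = k.
Proof.
move=> winj; elim=> [_|k IH kS].
  exists (- (1 + \sum_(h in S) `|w h|)).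
  have lt h : h \in S -> - (1 + \sum_(h in S) `|w h|) < w h.
    move=> hS; rewrite (bigD1 h) //=.
    have : 0 <= \sum_(i in S | i != h) `|w i| by apply: sumr_ge0.
    have := ler_norm (- w h); rewrite normrN.
    lra.
  split.
    by move=> h hS; rewrite gt_eqF // lt.
  apply/eqP; rewrite cards_eq0; apply/eqP/setP => h; rewrite !inE.
  by case: (boolP (h \in S)) => //= hS; rewrite ltNge ltW // lt.
have [t [tn tc]] := IH (ltnW kS).
pose T := [set h in S | t < w h].
have Tn : T != finset.set0.
  apply/set0Pn; case: (boolP [exists h, (h \in S) && (t < w h)]).
    by case/existsP => h hh; exists h; rewrite inE.
  move/existsPn => hn; exfalso.
  suff : [set h in S | w h < t] = S by move=> e; move: kS; rewrite -tc e ltnn.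
  apply/setP => h; rewrite inE; case: (boolP (h \in S)) => //= hS.
  have := hn h; rewrite hS /= -leNgt le_eqVlt => /orP[/eqP e|//].
  by move: (tn h hS); rewrite e eqxx.
have [g gT gmin] := exists_min w Tn.
move: gT; rewrite inE => /andP[gS tg].
pose U := [set h in S | w g < w h].
pose t' := if U == finset.set0 then w g + 1 else (w g + w (odflt g [pick m in U | [forall h in U, w m <= w h]]) ) / 2.
have key h : h \in S -> (w g < w h -> t' < w h) /\ w g < t'.
  move=> hS.
  case: (eqVneq U finset.set0) => U0.
    rewrite /t' U0 eqxx; split; last lra.
    move=> gh; have : h \in U by rewrite inE hS gh.
    by rewrite U0 inE.
  rewrite /t' (negbTE U0).
  have [m mU mmin] := exists_min w U0.
  case: pickP => [m' /andP[m'U /forallP m'min]|/(_ m)].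
    move: (m'U); rewrite inE => /andP[_ gm'].
    split; last lra.
    move=> gh; have hU : h \in U by rewrite inE hS gh.
    have := m'min h; rewrite hU /= => wm'.
    lra.
  rewrite mU /=; move/negbT => /negP; case.
  by apply/forallP => h'; apply/implyP => h'U; apply: mmin.
exists t'; split.
  move=> h hS; apply/eqP => e.
  have [k1 k2] := key h hS.
  case: (ltrgtP (w g) (w h)) => [gh|hg|gh].
  - by have := k1 gh; rewrite e ltxx.
  - by move: k2; rewrite -e => k2; move: (lt_trans k2 hg); rewrite ltxx.
  - by move: k2; rewrite -e -gh ltxx.
have -> : [set h in S | w h < t'] = g |: [set h in S | w h < t].
  apply/setP => h; rewrite !inE.
  case: (boolP (h \in S)) => hS /=; last first.
    by rewrite ?orbF; case: eqP => // e; move: hS; rewrite e gS.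
  have [k1 k2] := key h hS.
  case: (eqVneq h g) => [->|hg] /=; first by rewrite (key g gS).2.
  case: (ltrgtP (w h) t) => [ht|th|e].
  - by lra.
  - have hT : h \in T by rewrite inE hS th.
    have := gmin h hT; rewrite le_eqVlt => /orP[/eqP e|gh].
      by exfalso; move/negP: hg; apply; apply/eqP; apply: winj => //.
    by have := k1 gh; lra.
  - by move: (tn h hS); rewrite e eqxx.
rewrite cardsU1 tc inE gS /= ltNge (ltW tg) /=.
by rewrite add1n.
Qed.

End Count.

Lemma ivt_lin (R : realType) (A B : R) : A != 0 -> B != 0 -> (0 < A) != (0 < B) ->
  exists t, [/\ 0 <= t, t <= 1 & A + t * (B - A) = 0].
Proof.
move=> A0 B0 ne.
case: (ltrgtP 0 A) ne A0 => [Ap|An|]//= ne _.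
  have Bn : B < 0 by move: ne B0; case: (ltrgtP B 0).
  exists (A / (A - B)); split.
  - by apply: divr_ge0; lra.
  - by rewrite ler_pdivrMr; lra.
  - by field; lra.
have Bp : 0 < B by move: ne B0; case: (ltrgtP B 0).
exists (- A / (B - A)); split.
- by apply: divr_ge0; lra.
- by rewrite ler_pdivrMr; lra.
- by field; lra.
Qed.

Lemma sgn_mul (R : realType) (B C : R) : B != 0 -> C != 0 ->
  (0 < B * C) = ((0 < B) == (0 < C)).
Proof.
move=> B0 C0.
case: (ltrgtP 0 B) B0 => [Bp|Bn|]//= _; case: (ltrgtP 0 C) C0 => [Cp|Cn|]//= _.
- have h : 0 < B * C by nra.
  by rewrite h.
- have h : B * C < 0 by nra.
  by rewrite ltNge (ltW h).
- have h : B * C < 0 by nra.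
  by rewrite ltNge (ltW h).
- have h : 0 < B * C by nra.
  by rewrite h.
Qed.

Section WithV.
Variables (R : realType) (d : nat) (I : finType) (a : I -> 'rV[R]_d) (H0 : {set I}).
Variable v : 'rV[R]_d.
Local Notation f i x := (dotv (a i) x).
Local Notation cell := (cell a).
Hypothesis ss : forall i j, i \in ~: H0 -> j \in ~: H0 -> i != j ->
  exists2 k, k \in H0 & hyp a i `&` hyp a j `<=` hyp a k.
Hypothesis v0 : forall i, i \in H0 -> f i v = 0.
Hypothesis v1 : forall h, h \in ~: H0 -> f h v != 0.

Definition phi h x := f h x / f h v.
Definition Pos x := [set h in ~: H0 | 0 < phi h x].

Lemma phi_line h x t : h \in ~: H0 -> phi h (x + t *: v) = phi h x + t.
Proof. by move=> hH; rewrite /phi dotvD dotvZ mulrDl mulfK // v1. Qed.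

Lemma f_line i x t : i \in H0 -> f i (x + t *: v) = f i x.
Proof. by move=> iH; rewrite dotvD dotvZ v0 // mulr0 addr0. Qed.

Lemma cell_line p t : arr_compl a H0 p -> cell H0 p (p + t *: v).
Proof.
move=> Ap; split=> i iH; last by rewrite f_line.
by rewrite /hyp /= f_line //; exact: Ap.
Qed.

Lemma phi_eq0 h x : h \in ~: H0 -> (phi h x == 0) = (f h x == 0).
Proof. by move=> hH; rewrite /phi mulf_eq0 invr_eq0 (negbTE (v1 hH)) orbF. Qed.

Lemma phi_neq y h h' : arr_compl a H0 y -> h \in ~: H0 -> h' \in ~: H0 -> h != h' ->
  phi h y != phi h' y.
Proof.
move=> Ay hH h'H ne; apply/eqP => e.
have [k kH sub] := ss hH h'H ne.
pose z := y + (- phi h y) *: v.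
have : (hyp a h `&` hyp a h') z.
  split; rewrite /hyp /=; apply/eqP.
    by rewrite -phi_eq0 // phi_line // addrN.
  by rewrite -phi_eq0 // phi_line // -e addrN.
move/sub; rewrite /hyp /= f_line //; exact: Ay.
Qed.

Lemma phi_lin h x y t : phi h (x + t *: (y - x)) = phi h x + t * (phi h y - phi h x).
Proof. by rewrite /phi dotvD dotvZ dotvB; ring. Qed.

Lemma cell_seg S p x t : arr_compl a S p -> cell S p x -> 0 <= t -> t <= 1 ->
  cell S p (p + t *: (x - p)).
Proof.
move=> Ap [Ax Hx] t0 t1.
have fsg i : f i (p + t *: (x - p)) = (1 - t) * f i p + t * f i x.
  by rewrite dotvD dotvZ dotvB; ring.
split=> i iS.
  rewrite /hyp /= fsg; apply/eqP.
  by case: (sign_comb t0 t1 (compl_neq Ap iS) (compl_neq Ax iS) (Hx i iS)).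
rewrite fsg.
by case: (sign_comb t0 t1 (compl_neq Ap iS) (compl_neq Ax iS) (Hx i iS)).
Qed.

Lemma phi_order p x h h' : arr_compl a H0 p -> cell H0 p x ->
  h \in ~: H0 -> h' \in ~: H0 -> h != h' ->
  (phi h x < phi h' x) = (phi h p < phi h' p).
Proof.
move=> Ap Cx hH h'H ne.
have gnz y : arr_compl a H0 y -> phi h' y - phi h y != 0.
  by move=> Ay; rewrite subr_eq0 eq_sym; apply: phi_neq.
rewrite -subr_gt0 -[RHS]subr_gt0.
case: (boolP ((0 < phi h' x - phi h x) == (0 < phi h' p - phi h p))) => [/eqP//|neq].
exfalso.
have neq' : (0 < phi h' p - phi h p) != (0 < phi h' x - phi h x) by rewrite eq_sym.
have [t [t0 t1 e]] := ivt_lin (gnz p Ap) (gnz x Cx.1) neq'.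
have Cz := cell_seg Ap Cx t0 t1.
have := gnz _ Cz.1; rewrite !phi_lin.
have -> : phi h' p + t * (phi h' x - phi h' p) - (phi h p + t * (phi h x - phi h p)) =
  (phi h' p - phi h p) + t * ((phi h' x - phi h x) - (phi h' p - phi h p)) by ring.
by rewrite e eqxx.
Qed.

Definition rk p h := #|[set h' in ~: H0 | phi h p < phi h' p]|.

Lemma rk_eq p x h : arr_compl a H0 p -> cell H0 p x -> h \in ~: H0 ->
  [set h' in ~: H0 | phi h x < phi h' x] = [set h' in ~: H0 | phi h p < phi h' p].
Proof.
move=> Ap Cx hH; apply/setP => h'; rewrite !inE.
case: (boolP (h' \in H0)) => //= h'H.
have h'H' : h' \in ~: H0 by rewrite inE h'H.
case: (eqVneq h h') => [->|ne]; first by rewrite !ltxx.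
exact: phi_order.
Qed.

Lemma pos_rank p x h : arr_compl a H0 p -> cell H0 p x -> h \in ~: H0 ->
  (h \in Pos x) = (rk p h < #|Pos x|)%N.
Proof.
move=> Ap Cx hH; rewrite /rk -(rk_eq Ap Cx hH).
case: (boolP (h \in Pos x)) => hP.
  apply/esym; apply: proper_card; apply/properP; split.
    apply/fintype.subsetP => h'; rewrite /Pos !inE => /andP[-> hh'] /=.
    move: hP; rewrite /Pos inE => /andP[_ hp]; lra.
  by exists h => //; rewrite inE ltxx andbF.
apply/esym/negbTE; rewrite -leqNgt; apply: subset_leq_card.
apply/fintype.subsetP => h'; rewrite /Pos !inE => /andP[-> hh'] /=.
move: hP; rewrite /Pos inE hH /= -leNgt => hp; lra.
Qed.

Lemma Pos_sub x : Pos x \subset ~: H0.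
Proof. by apply/fintype.subsetP => h; rewrite inE => /andP[]. Qed.

Lemma pos_le p x y : arr_compl a H0 p -> cell H0 p x -> cell H0 p y ->
  (#|Pos x| <= #|Pos y|)%N -> Pos x \subset Pos y.
Proof.
move=> Ap Cx Cy le; apply/fintype.subsetP => h hP.
have hH : h \in ~: H0 by move/fintype.subsetP: (Pos_sub x); apply.
rewrite (pos_rank Ap Cy hH); rewrite (pos_rank Ap Cx hH) in hP.
exact: leq_trans hP le.
Qed.

Lemma pos_eq p x y : arr_compl a H0 p -> cell H0 p x -> cell H0 p y ->
  #|Pos x| = #|Pos y| -> Pos x = Pos y.
Proof.
move=> Ap Cx Cy e; apply/eqP; rewrite finset.eqEsubset.
by rewrite (pos_le Ap Cx Cy) ?e // (pos_le Ap Cy Cx) ?e.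
Qed.

Lemma sgn_phi h x : h \in ~: H0 -> f h x != 0 ->
  (0 < f h x) = ((0 < phi h x) == (0 < f h v)).
Proof.
move=> hH fx; have vz := v1 hH.
have -> : f h x = phi h x * f h v by rewrite /phi mulfVK.
by rewrite sgn_mul // phi_eq0.
Qed.

Lemma pos_dif x y h : h \in ~: H0 -> f h x != 0 -> f h y != 0 ->
  ((0 < f h x) != (0 < f h y)) = ((h \in Pos x) != (h \in Pos y)).
Proof.
move=> hH fx fy; rewrite (sgn_phi hH fx) (sgn_phi hH fy) /Pos !inE.
move: (hH); rewrite inE => -> /=.
by case: (0 < phi h x); case: (0 < phi h y); case: (0 < f h v).
Qed.

Lemma exists_k p k : arr_compl a H0 p -> (k <= #|~: H0|)%N ->
  exists x, [/\ cell H0 p x, arr_compl a [set: I] x & #|Pos x| = k].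
Proof.
move=> Ap kl.
have winj : {in ~: H0 &, injective (fun h => - phi h p)}.
  move=> h h' hH h'H /oppr_inj e; apply/eqP; apply: contraT => ne.
  by move: (phi_neq Ap hH h'H ne); rewrite e eqxx.
have [t [tn tc]] := count_t winj kl.
have posE h : h \in ~: H0 -> (0 < phi h (p + t *: v)) = (- phi h p < t).
  by move=> hH; rewrite phi_line // -[RHS]subr_gt0 opprK addrC.
exists (p + t *: v); split.
- exact: cell_line.
- move=> i _; case: (boolP (i \in H0)) => iH.
    by rewrite /hyp /= f_line //; exact: Ap.
  have iH' : i \in ~: H0 by rewrite inE.
  rewrite /hyp /= => /eqP; rewrite -phi_eq0 // phi_line // => /eqP e.
  by move: (tn i iH') => /eqP; apply; lra.
- rewrite -tc; apply: eq_card => h; rewrite /Pos !inE.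
  case: (boolP (h \in H0)) => //= hH.
  by rewrite posE // inE hH.
Qed.

End WithV.

Section Assembly.
Variables (R : realType) (d : nat) (I : finType) (a : I -> 'rV[R]_d) (H0 : {set I}).
Local Notation f i x := (dotv (a i) x).
Local Notation cell := (cell a).
Local Notation T := [set: I]%SET.
Local Notation dif := (difS a).

Lemma difE S x y i : (i \in dif S x y) = (i \in S) && ((0 < f i x) != (0 < f i y)).
Proof. by rewrite inE. Qed.

Lemma difT x y i : (i \in dif T x y) = ((0 < f i x) != (0 < f i y)).
Proof. by rewrite !inE. Qed.

Lemma complT_H0 x : arr_compl a T x -> arr_compl a H0 x.
Proof. by move=> Ax i _; apply: Ax; rewrite inE. Qed.

Lemma fiberP p C : arr_compl a H0 p ->
  ((regions a T C /\ C `<=` cell H0 p) <->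
   exists x, [/\ cell H0 p x, arr_compl a T x & C = cell T x]).
Proof.
move=> Ap; split.
  case=> /regionsP [x Ax ->] sub; exists x; split=> //.
  exact/sub/cell_mem.
case=> x [Cx Ax ->]; split; first exact: regions_cell.
move=> z [Az Hz]; split; first exact: complT_H0.
by move=> i iH; rewrite Hz ?inE // Cx.2.
Qed.

Lemma dif_sym S x y : dif S x y = dif S y x.
Proof. by apply/setP => i; rewrite /difS !inE eq_sym. Qed.

Lemma dif_nil x y : arr_compl a T x -> arr_compl a T y -> #|dif T x y| = 0%N ->
  cell T x = cell T y.
Proof.
move=> Ax Ay /eqP; rewrite cards_eq0 => /eqP e.
apply/esym/cell_eq; split=> // i _.
have : i \notin dif T x y by rewrite e inE.
by rewrite /difS !inE negbK => /eqP.
Qed.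

Section V.
Variable v : 'rV[R]_d.
Hypothesis ss : forall i j, i \in ~: H0 -> j \in ~: H0 -> i != j ->
  exists2 k, k \in H0 & hyp a i `&` hyp a j `<=` hyp a k.
Hypothesis v0 : forall i, i \in H0 -> f i v = 0.
Hypothesis v1 : forall h, h \in ~: H0 -> f h v != 0.
Local Notation Pos := (Pos a H0 v).

Lemma notPos x i : i \in H0 -> i \notin Pos x.
Proof. by move=> iH; rewrite inE inE iH. Qed.

Lemma dif_same p x y : arr_compl a H0 p -> cell H0 p x -> cell H0 p y ->
  arr_compl a T x -> arr_compl a T y -> (#|Pos x| <= #|Pos y|)%N ->
  dif T x y = Pos y :\: Pos x.
Proof.
move=> Ap Cx Cy Ax Ay le.
have sub := pos_le ss v0 v1 Ap Cx Cy le.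
apply/setP => i; rewrite difT finset.in_setD.
case: (boolP (i \in H0)) => iH.
  rewrite (Cx.2 i iH) (Cy.2 i iH) eqxx.
  by rewrite (negbTE (notPos y iH)) andbF.
have iH' : i \in ~: H0 by rewrite inE.
rewrite (pos_dif v1 iH' (compl_neq Ax (finset.in_setT i)) (compl_neq Ay (finset.in_setT i))).
case: (boolP (i \in Pos x)) => ix; last by case: (i \in Pos y).
by rewrite (fintype.subsetP sub i ix).
Qed.

Lemma dif_card p x y : arr_compl a H0 p -> cell H0 p x -> cell H0 p y ->
  arr_compl a T x -> arr_compl a T y -> (#|Pos x| <= #|Pos y|)%N ->
  #|dif T x y| = (#|Pos y| - #|Pos x|)%N.
Proof.
move=> Ap Cx Cy Ax Ay le.
rewrite (dif_same Ap Cx Cy Ax Ay le) cardsD.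
by rewrite (finset.setIidPr (pos_le ss v0 v1 Ap Cx Cy le)).
Qed.

Lemma dif_card2 p x y : arr_compl a H0 p -> cell H0 p x -> cell H0 p y ->
  arr_compl a T x -> arr_compl a T y ->
  #|dif T x y| = ((#|Pos y| - #|Pos x|) + (#|Pos x| - #|Pos y|))%N.
Proof.
move=> Ap Cx Cy Ax Ay.
case: (leqP #|Pos x| #|Pos y|) => le.
  by rewrite (dif_card Ap Cx Cy Ax Ay le); move: le; rewrite -subn_eq0 => /eqP->; rewrite addn0.
rewrite dif_sym (dif_card Ap Cy Cx Ay Ax (ltnW le)).
by move: (ltnW le); rewrite -subn_eq0 => /eqP->.
Qed.

Lemma path_of p (X : nat -> 'rV[R]_d) : arr_compl a H0 p ->
  (forall k, (k <= #|~: H0|)%N ->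
     [/\ cell H0 p (X k), arr_compl a T (X k) & #|Pos (X k)| = k]) ->
  path_enum (region_adj a T) [set C | regions a T C /\ C `<=` cell H0 p]
    #|~: H0| (fun k => cell T (X k)).
Proof.
move=> Ap HX.
have dc i j : (i <= #|~: H0|)%N -> (j <= #|~: H0|)%N ->
    #|dif T (X i) (X j)| = ((j - i) + (i - j))%N.
  move=> il jl; have [Ci Ai Pi] := HX i il; have [Cj Aj Pj] := HX j jl.
  by rewrite (dif_card2 Ap Ci Cj Ai Aj) Pi Pj.
split.
- move=> i j il jl e.
  have [Ci Ai Pi] := HX i il; have [Cj Aj Pj] := HX j jl.
  have : cell T (X i) (X j) by rewrite e; exact: cell_mem.
  case=> _ Hj.
  have : #|dif T (X i) (X j)| = 0%N.
    apply/eqP; rewrite cards_eq0; apply/eqP/setP => k; rewrite /difS !inE.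
    by rewrite Hj ?inE // eqxx andbF.
  rewrite dc //; lia.
- apply/seteqP; split.
    move=> C /(fiberP _ Ap) [y [Cy Ay ->]].
    have kl : (#|Pos y| <= #|~: H0|)%N by apply: subset_leq_card; exact: Pos_sub.
    exists #|Pos y| => //=.
    have [Ck Ak Pk] := HX _ kl.
    apply: dif_nil => //.
    by rewrite (dif_card2 Ap Ck Cy Ak Ay) Pk subnn.
  move=> _ [k kl <-]; have [Ck Ak Pk] := HX k kl.
  by apply/(fiberP _ Ap); exists (X k).
- move=> i j il jl.
  have [Ci Ai Pi] := HX i il; have [Cj Aj Pj] := HX j jl.
  rewrite (adj_cell Ai Aj) dc //.
  split; [move=> h|case=> h]; lia.
Qed.

Lemma dif_cross p p' x y : cell H0 p x -> cell H0 p' y ->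
  arr_compl a T x -> arr_compl a T y -> Pos x = Pos y ->
  dif T x y = dif H0 p p'.
Proof.
move=> Cx Cy Ax Ay e; apply/setP => i; rewrite /difS !inE.
case: (boolP (i \in H0)) => iH /=.
  by rewrite (Cx.2 i iH) (Cy.2 i iH).
have iH' : i \in ~: H0 by rewrite inE.
by rewrite (pos_dif v1 iH' (compl_neq Ax (finset.in_setT i)) (compl_neq Ay (finset.in_setT i))) e eqxx.
Qed.

Lemma cross_pos p p' x y : cell H0 p x -> cell H0 p' y ->
  arr_compl a T x -> arr_compl a T y -> #|dif H0 p p'| = 1%N ->
  #|dif T x y| = 1%N -> Pos x = Pos y.
Proof.
move=> Cx Cy Ax Ay /eqP/cards1P [i0 e0] d1.
have i0d : i0 \in dif H0 p p' by rewrite e0 inE.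
move: (i0d); rewrite /difS inE => /andP[i0H i0s].
have i0T : i0 \in dif T x y.
  by rewrite difT (Cx.2 i0 i0H) (Cy.2 i0 i0H).
apply/setP => h.
case: (boolP ((h \in Pos x) == (h \in Pos y))) => [/eqP//|ne]; exfalso.
have hH : h \in ~: H0.
  move: ne; case: (boolP (h \in Pos x)) => hx.
    by move=> _; move/fintype.subsetP: (Pos_sub a H0 v x); apply.
  case: (boolP (h \in Pos y)) => // hy _.
  by move/fintype.subsetP: (Pos_sub a H0 v y); apply.
have hT : h \in dif T x y.
  rewrite difT.
  by rewrite (pos_dif v1 hH (compl_neq Ax (finset.in_setT h)) (compl_neq Ay (finset.in_setT h))).
have hne : i0 != h.
  by apply: contraTneq hH => <-; rewrite inE i0H.
have : (#|[set i0; h]%SET| <= #|dif T x y|)%N.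
  apply: subset_leq_card; apply/fintype.subsetP => z; rewrite finset.in_set2.
  by case/orP => /eqP ->.
by rewrite cards2 hne d1.
Qed.

End V.
End Assembly.

Unset Implicit Arguments.

Theorem lemma2p6 (R : realType) (d : nat) (I : finType) (a : I -> 'rV[R]_d)
  (n : nat) (H0 : {set I}) :
  (* a finite set of (distinct) linear hyperplanes *)
  (forall i, a i != 0) ->
  (forall i j, hyp a i = hyp a j -> i = j) ->
  (* supersolvable of rank n >= 3 with decomposition H = H0 ⊔ H1, H1 = ~: H0 *)
  arr_rank a [set: I] = n -> (3 <= n)%N ->
  H0 != finset.set0 -> ~: H0 != finset.set0 ->
  supersolvable a H0 -> arr_rank a H0 = n.-1 ->
  (forall i j, i \in ~: H0 -> j \in ~: H0 -> i != j ->
     exists2 k, k \in H0 & hyp a i `&` hyp a j `<=` hyp a k) ->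
  let fiber := fun C0 : set 'rV[R]_d =>
    [set C | regions a [set: I] C /\ C `<=` C0] in
  let G := region_adj a [set: I] in
  let l := #|~: H0| in
  (* (i) *)
  (forall C0, regions a H0 C0 -> exists A, path_enum G (fiber C0) l A) /\
  (* (ii) *)
  (forall C0 C0', region_adj a H0 C0 C0' ->
     exists A B, [/\ path_enum G (fiber C0) l A, path_enum G (fiber C0') l B,
       G (A 0%N) (B 0%N), G (A l) (B l) &
       forall i j, (i <= l)%N -> (j <= l)%N -> G (A i) (B j) -> i = j]) /\
  (* (iii) *)
  (forall C0 C0', regions a H0 C0 -> regions a H0 C0' -> C0 <> C0' ->
     ~ region_adj a H0 C0 C0' ->
     forall C C', fiber C0 C -> fiber C0' C' -> ~ G C C').
Proof.
move=> anz ainj rT n3 _ _ _ r0 ss fiber G l.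
have n0 : (0 < n)%N by apply: leq_trans n3.
have [v [v0 v1]] := exists_v anz ainj rT r0 n0 ss.
have build p : arr_compl a H0 p -> exists X : nat -> 'rV[R]_d, forall k, (k <= l)%N ->
    [/\ cell a H0 p (X k), arr_compl a [set: I] (X k) & #|Pos a H0 v (X k)| = k].
  move=> Ap.
  have hex : forall k : nat, exists x : 'rV[R]_d, (k <= l)%N ->
    [/\ cell a H0 p x, arr_compl a [set: I] x & #|Pos a H0 v x| = k].
    move=> k; case: (leqP k l) => kl.
      have [x hx] := exists_k ss v0 v1 Ap kl.
      by exists x.
    by exists p.
  have [X HX] := choice hex.
  by exists X.
split; [|split].
- move=> C0 /regionsP [p Ap ->].
  have [X HX] := build p Ap.
  exists (fun k => cell a [set: I] (X k)).
  exact: (path_of ss v0 v1 Ap HX).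
- move=> C0 C0' adj.
  have [/regionsP [p Ap e1] [/regionsP [p' Ap' e2] _]] := adj.
  subst C0 C0'.
  have d1 := (adj_cell Ap Ap').1 adj.
  have [X HX] := build p Ap.
  have [Y HY] := build p' Ap'.
  exists (fun k => cell a [set: I] (X k)), (fun k => cell a [set: I] (Y k)).
  have l0 : (0 <= l)%N by [].
  have ll : (l <= l)%N by [].
  split.
  + exact: (path_of ss v0 v1 Ap HX).
  + exact: (path_of ss v0 v1 Ap' HY).
  + have [Cx Ax Px] := HX 0%N l0; have [Cy Ay Py] := HY 0%N l0.
    rewrite /G (adj_cell Ax Ay) (dif_cross v1 Cx Cy Ax Ay) //.
    have ex : Pos a H0 v (X 0%N) = finset.set0 by apply/eqP; rewrite -cards_eq0 Px.
    have ey : Pos a H0 v (Y 0%N) = finset.set0 by apply/eqP; rewrite -cards_eq0 Py.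
    by rewrite ex ey.
  + have [Cx Ax Px] := HX l ll; have [Cy Ay Py] := HY l ll.
    rewrite /G (adj_cell Ax Ay) (dif_cross v1 Cx Cy Ax Ay) //.
    have ex : Pos a H0 v (X l) = ~: H0 by apply/eqP; rewrite finset.eqEcard Pos_sub Px leqnn.
    have ey : Pos a H0 v (Y l) = ~: H0 by apply/eqP; rewrite finset.eqEcard Pos_sub Py leqnn.
    by rewrite ex ey.
  + move=> i j il jl.
    have [Cx Ax Px] := HX i il; have [Cy Ay Py] := HY j jl.
    rewrite /G (adj_cell Ax Ay) => dd.
    by rewrite -Px -Py (cross_pos v1 Cx Cy Ax Ay d1 dd).
- move=> C0 C0' /regionsP [p Ap ->] /regionsP [p' Ap' ->] ne nadj C C'.
  rewrite /fiber /= => /(fiberP _ Ap) [x [Cx Ax ->]] /(fiberP _ Ap') [y [Cy Ay ->]].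
  rewrite /G (adj_cell Ax Ay) => dd.
  apply: nadj.
  rewrite -(cell_eq Cx) -(cell_eq Cy).
  have Ax0 : arr_compl a H0 x := complT_H0 (H0 := H0) Ax.
  have Ay0 : arr_compl a H0 y := complT_H0 (H0 := H0) Ay.
  apply/(adj_cell Ax0 Ay0).
  have sub : difS a H0 x y \subset difS a [set: I] x y.
    by apply/fintype.subsetP => i; rewrite !inE => /andP[_ ->].
  have := subset_leq_card sub; rewrite dd.
  case: (ltngtP #|difS a H0 x y| 1) => //; rewrite ltnS leqn0 cards_eq0 => /eqP e0 _.
  exfalso; apply: ne; rewrite -(cell_eq Cx) -(cell_eq Cy).
  apply/esym/cell_eq; split=> // i iH.
  have : i \notin difS a H0 x y by rewrite e0 inE.
  by rewrite !inE iH negbK => /eqP.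
Qed.
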